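(* Let $N\in\mathbb N$ and let $a=(a_0,a_1,\dots,a_N)\in\mathbb N^{N+1}$ satisfy $a_0\le a_1\le\dots\le a_N$, $a_0<a_2<a_4<\cdots$, $a_1<a_3<a_5<\cdots$, and suppose the set $\mathcal J=\{i\in[0,N]: a_i$ appears exactly once in the sequence $a\}$ is nonempty. Then $\mathcal J=\{i_0<i_1<\dots<i_\mu\}$ with $\mu\in\mathbb N$, $\mu\equiv N\pmod2$, $i_s\equiv s\pmod 2$, and $i_{s+1}=i_s+2m_s+1$ with $m_s\in\mathbb N$ for $s\in[0,\mu-1]$. Let $\mathcal E$ be the set of $b=(b_0,\dots,b_N)\in\mathbb N^{N+1}$ with $b_0<b_2<b_4<\cdots$, $b_1<b_3<b_5<\cdots$ and such that the multisets $\{b_0,\dots,b_N\}$ and $\{a_0,\dots,a_N\}$ coincide. For $b\in\mathcal E$ let $\mathring b=(b_0,b_1,b_2+1,b_3+1,b_4+2,b_5+2,\dots)$, i.e. $\mathring b_i=b_i+\lfloor i/2\rfloor$. For $X\subset[0,\mu-1]\cap2\mathbb N$ define $a^X\in\mathcal E$ by: for $s\in X$, $(a^X_{i_s},a^X_{i_s+1},a^X_{i_s+2},a^X_{i_s+3},\dots,a^X_{i_s+2m_s},a^X_{i_s+2m_s+1})=(a_{i_s+1},a_{i_s},a_{i_s+3},a_{i_s+2},\dots,a_{i_s+2m_s+1},a_{i_s+2m_s})$, and $a^X_i=a_i$ for all other $i\in[0,N]$. If $b\in\mathcal E$ is such that the multiset $\{\mathring b_0,\dots,\mathring b_N\}$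 equals the multiset $\{\mathring a_0,\dots,\mathring a_N\}$, then there exists $X\subset[0,\mu-1]\cap2\mathbb N$ with $b=a^X$. *)

(* Defs.v *)
(* Sequences a = (a_0,...,a_N) are represented as
   [a : seq nat] with [size a = N.+1]; a_i is [nth 0 a i]. *)
From mathcomp Require Import all_boot.
Set Implicit Arguments. Unset Strict Implicit. Unset Printing Implicit Defensive.

Definition parity_incr (a : seq nat) : Prop :=
  forall i, i.+2 < size a -> nth 0 a i < nth 0 a i.+2.

Definition Jset (a : seq nat) : seq nat :=
  [seq i <- iota 0 (size a) | count_mem (nth 0 a i) a == 1].

(* i_s and m_s := (i_{s+1} - i_s - 1)/2, so that i_{s+1} = i_s + 2 m_s + 1. *)
Definition idx (a : seq nat) (s : nat) : nat := nth 0 (Jset a) s.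
Definition mm (a : seq nat) (s : nat) : nat := (idx a s.+1 - idx a s).-1./2.

Definition ring_seq (b : seq nat) : seq nat :=
  [seq nth 0 b i + i./2 | i <- iota 0 (size b)].

Definition in_E (a b : seq nat) : Prop :=
  size b = size a /\ parity_incr b /\ perm_eq b a.

(* For s in X (with s < mu) and 0 <= k <= m_s, the entries at positions
   i_s + 2k and i_s + 2k + 1 are exchanged; all other entries unchanged. *)
Definition src_pos (a : seq nat) (X : seq nat) (i : nat) : nat :=
  match [seq s <- X | (s.+1 < size (Jset a)) &&
                       (idx a s <= i <= idx a s + (mm a s).*2.+1)] with
  | s :: _ => if odd (i - idx a s) then i.-1 else i.+1
  | [::] => i
  end.

Definition aX (a : seq nat) (X : seq nat) : seq nat :=
  mkseq (fun i => nth 0 a (src_pos a X i)) (size a).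

(* Main.v *)
Require Import Defs.
From mathcomp Require Import all_boot zify.

Lemma pmono_step (b : seq nat) : parity_incr b ->
  forall d i, i + d.*2.+2 < size b -> nth 0 b i < nth 0 b (i + d.*2.+2).
Proof.
move=> Pb; elim=> [|d IH] i H.
  by rewrite addn2; apply: Pb; rewrite -addn2.
have H1 : i + d.*2.+2 < size b by lia.
apply: (ltn_trans (IH i H1)).
have -> : i + d.+1.*2.+2 = (i + d.*2.+2).+2 by lia.
by apply: Pb; lia.
Qed.

Lemma pmono (b : seq nat) : parity_incr b ->
  forall i j, i < j -> j < size b -> odd i = odd j -> nth 0 b i < nth 0 b j.
Proof.
move=> Pb i j H1 H2 H3.
have -> : j = i + ((j - i)./2.-1).*2.+2.
  have : odd (j - i) = false by rewrite oddB ?H3 ?addbb // ltnW.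
  lia.
apply: pmono_step => //.
have : odd (j - i) = false by rewrite oddB ?H3 ?addbb // ltnW.
lia.
Qed.

Lemma smono (a : seq nat) : sorted leq a ->
  forall i j, i <= j -> j < size a -> nth 0 a i <= nth 0 a j.
Proof.
move=> Sa i j H1 H2.
apply: (sorted_leq_nth leq_trans leqnn 0 Sa) => //; rewrite inE; lia.
Qed.

Arguments smono {a}.
Arguments pmono {b}.

Lemma count_iota0 (P : pred nat) m k :
  (forall i, m <= i -> i < m + k -> ~~ P i) -> count P (iota m k) = 0.
Proof.
move=> H; apply/eqP; rewrite -leqn0 leqNgt -has_count; apply/hasPn => i.
rewrite mem_iota => /andP[h1 h2]; exact: H.
Qed.

Lemma count_mem_iota (a : seq nat) v :
  count_mem v a = count (fun i => nth 0 a i == v) (iota 0 (size a)).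
Proof. by rewrite -{1}(mkseq_nth 0 a) /mkseq count_map. Qed.

Lemma CF (a : seq nat) p : sorted leq a -> parity_incr a -> p < size a ->
  count_mem (nth 0 a p) a =
  ((0 < p) && (nth 0 a p.-1 == nth 0 a p)) + 1 +
  ((p.+1 < size a) && (nth 0 a p.+1 == nth 0 a p)).
Proof.
move=> Sa Pa Hp; rewrite count_mem_iota.
have -> : iota 0 (size a) = iota 0 p ++ p :: iota p.+1 ((size a) - p.+1).
  rewrite -[in LHS](_ : p + (1 + ((size a) - p.+1)) = (size a)); last lia.
  by rewrite !iotaD add0n addn1.
rewrite count_cat /= eqxx addnA; congr (_ + _ + _).
  case: p Hp => [|p] Hp; first by [].
  rewrite (_ : iota 0 p.+1 = iota 0 p ++ [:: p]); last by rewrite -addn1 iotaD.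
  rewrite count_cat /=.
  rewrite count_iota0 ?add0n; last first.
    move=> i _ hi; apply/eqP => E.
    have : nth 0 a i < nth 0 a p.+1.
      have h1 : nth 0 a i < nth 0 a i.+2.
        by apply: (pmono Pa); [lia|lia|rewrite /= negbK].
      apply: (leq_trans h1); apply: (smono Sa); lia.
    by rewrite E ltnn.
  by rewrite addn0.
case: (ltnP p.+1 (size a)) => H.
  have -> : (size a) - p.+1 = 1 + ((size a) - p.+2) by lia.
  rewrite iotaD count_cat /= addn0.
  rewrite count_iota0 ?addn0 //.
  move=> i hi hi2; apply/eqP => E.
  have : nth 0 a p < nth 0 a i.
    have h1 : nth 0 a p < nth 0 a p.+2.
      by apply: (pmono Pa); [lia|lia|rewrite /= negbK].
    apply: (leq_trans h1); apply: (smono Sa); lia.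
  by rewrite E ltnn.
by rewrite (_ : (size a) - p.+1 = 0) //; lia.
Qed.

Definition sg (a : seq nat) (p : nat) := count_mem (nth 0 a p) a == 1.
Definition cnt (a : seq nat) p := count (sg a) (iota 0 p).

Lemma Jset_sg a : Jset a = [seq i <- iota 0 (size a) | sg a i].
Proof. by []. Qed.

Lemma iotaS0 p : iota 0 p.+1 = iota 0 p ++ [:: p].
Proof. by rewrite -addn1 iotaD. Qed.

Lemma cntS a p : cnt a p.+1 = cnt a p + sg a p.
Proof. by rewrite /cnt iotaS0 count_cat /= addn0. Qed.

Section Sing.
Variable a : seq nat.
Hypothesis Sa : sorted leq a.
Hypothesis Pa : parity_incr a.
Local Notation A := (nth 0 a).

Lemma N1 p : p < size a -> ~~ sg a p ->
  (0 < p /\ A p.-1 = A p) \/ (p.+1 < size a /\ A p.+1 = A p).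
Proof.
move=> Hp; rewrite /sg CF //.
case E1: ((0 < p) && (A p.-1 == A p)).
  by move/andP: E1 => [h /eqP e] _; left.
case E2: ((p.+1 < size a) && (A p.+1 == A p)).
  by move/andP: E2 => [h /eqP e] _; right.
by [].
Qed.

Lemma N2 p : p < size a -> 0 < p -> A p.-1 = A p -> ~~ sg a p.
Proof. by move=> Hp H0 E; rewrite /sg CF // H0 E eqxx. Qed.

Lemma N3 p : p.+1 < size a -> A p.+1 = A p -> ~~ sg a p.
Proof.
move=> Hp E; rewrite /sg CF ?Hp ?E ?eqxx //=; last lia.
by case: (_ && _).
Qed.

Lemma QP p : p <= size a ->
  odd (cnt a p + p) = ~~ [|| p == 0, p == size a | A p.-1 != A p].
Proof.
elim: p => [|p IH] Hp; first by rewrite /cnt.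
have Hp' : p < size a by lia.
rewrite cntS (_ : cnt a p + sg a p + p.+1 = (cnt a p + p + sg a p).+1); last lia.
rewrite /= oddD.
rewrite IH; last lia.
case Hs: (sg a p) => /=.
  have h1 : (p == 0) || (A p.-1 != A p).
    case: p {IH} Hp Hp' Hs => //= p Hp Hp' Hs.
    apply/negP => /eqP E; move: Hs; rewrite (negbTE (N2 _ Hp' _ E)) //.
  have -> : [|| p == 0, p == size a | A p.-1 != A p] = true.
    by case/orP: h1 => ->; rewrite ?orbT.
  rewrite /=.
  case: (ltnP p.+1 (size a)) => H.
    have h2 : A p != A p.+1.
      apply/negP => /eqP E; move: Hs; rewrite (negbTE (N3 _ H (esym E))) //.
    by rewrite h2 orbT.
  have -> : p.+1 = size a by lia.
  by rewrite eqxx.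
rewrite addbF negbK.
have [[h0 E]|[h2 E]] := N1 _ Hp' (negbT Hs).
  have -> : [|| p == 0, p == size a | A p.-1 != A p] = false.
    by rewrite E eqxx /=; apply/negP => /orP[] /eqP; lia.
  rewrite /=.
  case: (ltnP p.+1 (size a)) => H.
    have h3 : A p.-1 < A p.+1.
      have := Pa p.-1; rewrite (_ : p.-1.+2 = p.+1); last lia.
      by apply.
    by rewrite E in h3; rewrite neq_ltn h3 orbT.
  have -> : p.+1 = size a by lia.
  by rewrite eqxx.
have -> : [|| p.+1 == size a | A p != A p.+1] = false.
  by rewrite E eqxx orbF; apply/negP => /eqP; lia.
suff -> : [|| p == 0, p == size a | A p.-1 != A p] = true by [].
case: p {IH} Hp Hp' Hs h2 E => //= p Hp Hp' Hs h2 E.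
apply/orP; right.
have h3 : A p < A p.+2 by apply: Pa.
by rewrite E in h3; rewrite neq_ltn h3.
Qed.

End Sing.

Section JG.
Variable P : pred nat.
Local Notation C p := (count P (iota 0 p)).

Lemma JG1 n s : s < size [seq i <- iota 0 n | P i] ->
  [/\ nth 0 [seq i <- iota 0 n | P i] s < n,
      P (nth 0 [seq i <- iota 0 n | P i] s) &
      C (nth 0 [seq i <- iota 0 n | P i] s) = s].
Proof.
elim: n => [|n IH] //.
rewrite iotaS0 filter_cat size_cat nth_cat.
case: ifP => H1 H2.
  by have [h1 h2 h3] := IH H1; split => //; lia.
move: H2; rewrite /=; case HP: (P n) => /=; last by rewrite addn0 H1.
move=> H2; have Es : s = size [seq i <- iota 0 n | P i] by lia.
rewrite Es subnn /=; split => //; rewrite size_filter //.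
Qed.

Lemma JG2 n p : p < n -> P p -> nth 0 [seq i <- iota 0 n | P i] (C p) = p.
Proof.
move=> Hp HP.
have -> : iota 0 n = iota 0 p ++ p :: iota p.+1 (n - p.+1).
  rewrite -[in LHS](_ : p + (1 + (n - p.+1)) = n); last lia.
  by rewrite !iotaD add0n addn1.
by rewrite filter_cat nth_cat -size_filter ltnn subnn /= HP.
Qed.

Lemma Cmono p q : p <= q -> C p <= C q.
Proof.
move=> H; rewrite -(subnKC H) iotaD count_cat; exact: leq_addr.
Qed.

Lemma Cstrict p q : p < q -> P p -> C p < C q.
Proof.
move=> H HP; apply: (leq_trans _ (@Cmono p.+1 q H)).
by rewrite iotaS0 count_cat /= HP addn1.
Qed.

Lemma Csize n : size [seq i <- iota 0 n | P i] = C n.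
Proof. exact: size_filter. Qed.

End JG.

Section Parts.
Variable a : seq nat.
Hypothesis Sa : sorted leq a.
Hypothesis Pa : parity_incr a.
Local Notation A := (nth 0 a).

Lemma idx_info s : s < size (Jset a) ->
  [/\ idx a s < size a, sg a (idx a s) & cnt a (idx a s) = s].
Proof. by rewrite /idx Jset_sg => H; apply: JG1. Qed.

Lemma sg_bd p : p < size a -> sg a p -> (p == 0) || (A p.-1 != A p).
Proof.
case: p => //= p Hp Hs; apply/negP => /eqP E.
by move: Hs; rewrite (negbTE (N2 a Sa Pa _ Hp _ E)).
Qed.

Lemma F2 s : s < size (Jset a) -> odd (idx a s) = odd s.
Proof.
move=> H; have [h1 h2 h3] := idx_info _ H.
have := QP a Sa Pa _ (ltnW h1); rewrite h3.
have := sg_bd _ h1 h2; set p := idx a s => hb.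
have -> : [|| p == 0, p == size a | A p.-1 != A p] = true.
  by case/orP: hb => ->; rewrite ?orbT.
by rewrite oddD /=; case: (odd s); case: (odd p).
Qed.

Lemma idx_lt s t : s < t -> t < size (Jset a) -> idx a s < idx a t.
Proof.
move=> H1 H2; have [h1 h2 h3] := idx_info _ H2.
have [g1 g2 g3] := idx_info _ (ltn_trans H1 H2).
rewrite ltnNge; apply/negP => H.
have := Cmono (sg a) _ _ H; rewrite -/(cnt a _) -/(cnt a _) h3 g3; lia.
Qed.

Lemma F3 s : s.+1 < size (Jset a) -> idx a s.+1 = idx a s + (mm a s).*2.+1.
Proof.
move=> H; have h1 := idx_lt _ _ (ltnSn s) H.
have e1 := F2 _ H; have e2 := F2 _ (ltnW H).
rewrite /mm; move: h1 e1 e2 => /=; lia.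
Qed.

Lemma F1 N : size a = N.+1 -> Jset a != [::] -> odd (size (Jset a)).-1 = odd N.
Proof.
move=> Hs HJ.
have := QP a Sa Pa _ (leqnn (size a)); rewrite eqxx orbT /=.
rewrite /cnt -Csize -Jset_sg.
have : 0 < size (Jset a) by case: (Jset a) HJ.
rewrite Hs; lia.
Qed.

End Parts.

Lemma ring_cons2 x y l :
  ring_seq [:: x, y & l] = [:: x, y & map succn (ring_seq l)].
Proof.
rewrite /ring_seq /= !addn0 -[2]addn0 iotaDl -!map_comp; congr [:: _, _ & _].
by apply: eq_map => i /=; rewrite add0n addnS.
Qed.

Lemma mem_ring y l : y \in ring_seq l -> exists2 j, j < size l & y = nth 0 l j + j./2.
Proof. by case/mapP => j; rewrite mem_iota add0n => /andP[_ H] ->; exists j. Qed.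

Lemma perm_tail2 x y u w (s t : seq nat) :
  ((x = u /\ y = w) \/ (x = w /\ y = u)) ->
  perm_eq [:: x, y & s] [:: u, w & t] -> perm_eq s t.
Proof.
case=> [[-> ->]|[-> ->]]; first by rewrite !perm_cons.
have E := perm_catCA [:: w] [:: u] s; rewrite /= in E.
by rewrite E !perm_cons.
Qed.

Lemma parity_incr_tail2 x y l : parity_incr [:: x, y & l] -> parity_incr l.
Proof. by move=> P i Hi; apply: (P i.+2) => /=; lia. Qed.

Arguments perm_tail2 {x y u w s t}.
Arguments parity_incr_tail2 {x y l}.

Lemma front u w a' b0 b1 b' :
  sorted leq [:: u, w & a'] -> parity_incr [:: b0, b1 & b'] ->
  perm_eq [:: b0, b1 & b'] [:: u, w & a'] ->
  perm_eq (ring_seq [:: b0, b1 & b']) (ring_seq [:: u, w & a']) ->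
  (b0 = u /\ b1 = w) \/ (b0 = w /\ b1 = u).
Proof.
move=> Sa Pb Pm Rm.
have uw : u <= w by case/andP: Sa.
have aw : all (leq w) a' by apply: (order_path_min leq_trans); case/andP: Sa.
have allA x : x \in [:: u, w & a'] -> x = u \/ w <= x.
  rewrite !inE => /orP[/eqP->|/orP[/eqP->|H]]; [by left|by right|].
  by right; move/allP: aw; apply.
have minA x : x \in [:: u, w & a'] -> u <= x.
  by case/allA => [->|H] //; apply: leq_trans H.
have inB x : x \in [:: b0, b1 & b'] -> x \in [:: u, w & a'] by rewrite (perm_mem Pm).
have gtb y : y \in b' -> u < y.
  move=> Hy; have Hj : index y b' < size b' by rewrite index_mem.
  have := Pb (index y b'); rewrite /= nth_index // => H.
  apply: (leq_trans _ (H _)); last by lia.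
  apply: minA; apply: inB; apply: mem_nth; rewrite /=; lia.
have unb : u \notin b' by apply/negP => /gtb; rewrite ltnn.
case: (eqVneq u w) => [Euw|Nuw].
  subst w.
  have := permP Pm (pred1 u); rewrite /= eqxx.
  move/count_memPn: unb => -> /=.
  by case: eqP => [->|]; case: eqP => [->|] //; left.
have ub : (u == b0) || (u == b1).
  have : u \in [:: b0, b1 & b'] by rewrite (perm_mem Pm) mem_head.
  by rewrite !inE (negbTE unb) orbF => /orP[]/eqP->; rewrite eqxx ?orbT.
have wb : (w == b0) || (w == b1).
  have : w \in ring_seq [:: b0, b1 & b'].
    by rewrite (perm_mem Rm) ring_cons2 !inE eqxx orbT.
  rewrite ring_cons2 !inE => /orP[->//|/orP[->|H]]; first by rewrite orbT.
  case/mapP: H => y /mem_ring[j Hj ->] Ew.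
  have hb : nth 0 b' j \in b' by apply: mem_nth.
  have := gtb _ hb; have := allA (nth 0 b' j) (inB _ _).
  rewrite !inE hb !orbT => /(_ isT) [->|H]; first by rewrite ltnn.
  move=> _; move: Ew H; lia.
move: ub wb Nuw; case/orP=> /eqP <-; case/orP=> /eqP <-; rewrite ?eqxx //.
  by move=> _; left.
by move=> _; right.
Qed.

Definition Ch (a b : seq nat) :=
  (forall k, k.*2.+1 < size a ->
    (nth 0 b k.*2 = nth 0 a k.*2 /\ nth 0 b k.*2.+1 = nth 0 a k.*2.+1) \/
    (nth 0 b k.*2 = nth 0 a k.*2.+1 /\ nth 0 b k.*2.+1 = nth 0 a k.*2)) /\
  (forall k, k.*2.+1 = size a -> nth 0 b k.*2 = nth 0 a k.*2).

Lemma chunk n : forall a b, size a <= n -> sorted leq a -> parity_incr b ->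
  perm_eq b a -> perm_eq (ring_seq b) (ring_seq a) -> Ch a b.
Proof.
elim: n {-2}n (leqnn n) => [|n IH] m Hm a b Ha Sa Pb Pm Rm.
  have -> : a = [::] by case: a Ha Sa Pm Rm => //=; lia.
  by split => k /=; lia.
move: (perm_size Pm) => Sz.
case: a Ha Sa Pm Rm Sz => [|u [|w a']] Ha Sa Pm Rm Sz.
- by split => k /=; lia.
- case: b Pb Pm Rm Sz => [|y [|? ?]] //= Pb Pm Rm Sz.
  have : y \in [:: u] by rewrite -(perm_mem Pm) mem_head.
  rewrite inE => /eqP ->; split => k /=; first lia.
  by case: k.
case: b Pb Pm Rm Sz => [|b0 [|b1 b']] //= Pb Pm Rm Sz.
have F := @front u w a' b0 b1 b' Sa Pb Pm Rm.
have Sa' : sorted leq a' by move: Sa => /= /andP[_] /path_sorted.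
have Pb' := parity_incr_tail2 Pb.
have Pm' := perm_tail2 F Pm.
have Rm' : perm_eq (ring_seq b') (ring_seq a').
  move: Rm; rewrite !ring_cons2 => /(perm_tail2 F).
  by apply: perm_map_inj; exact: succn_inj.
have Ha' : size a' <= n by move: Ha Hm => /=; lia.
have [C1 C2] := IH n (leqnn n) a' b' Ha' Sa' Pb' Pm' Rm'.
split=> [[|k]|[|k]] /= Hk.
- by case: F => [[-> ->]|[-> ->]]; [left|right].
- by apply: C1; move: Hk; rewrite doubleS; lia.
- by lia.
- by apply: C2; move: Hk; rewrite doubleS; lia.
Qed.

Section Point.
Variables a b : seq nat.
Hypothesis Sa : sorted leq a.
Hypothesis Pa : parity_incr a.
Hypothesis Pb : parity_incr b.
Hypothesis Sz : size b = size a.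
Hypothesis Cab : Ch a b.
Local Notation A := (nth 0 a).
Local Notation B := (nth 0 b).

Definition sw k := B k.*2 != A k.*2.

Lemma sw_info {k} : sw k ->
  [/\ k.*2.+1 < size a, B k.*2 = A k.*2.+1, B k.*2.+1 = A k.*2 & A k.*2 != A k.*2.+1].
Proof.
rewrite /sw => H; case: Cab => C1 C2.
case: (ltnP k.*2.+1 (size a)) => H1.
  case: (C1 k H1) => [[E1 E2]|[E1 E2]]; first by rewrite E1 eqxx in H.
  by split => //; rewrite -E1 eq_sym.
case: (eqVneq k.*2.+1 (size a)) => H2; first by rewrite C2 ?eqxx in H.
by rewrite !nth_default ?eqxx in H; rewrite ?Sz; lia.
Qed.

Lemma nsw_info {k} : ~~ sw k -> k.*2 < size a ->
  B k.*2 = A k.*2 /\ (k.*2.+1 < size a -> B k.*2.+1 = A k.*2.+1).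
Proof.
rewrite /sw negbK => /eqP H H0; split => // H1.
case: Cab => C1 _; case: (C1 k H1) => [[E1 E2]|[E1 E2]] //.
by rewrite E2 -H E1.
Qed.

Lemma fwd {k} : sw k -> ~~ sg a k.*2.+1 -> sw k.+1.
Proof.
move=> H Hs; have [h1 e1 e2 ne] := sw_info H.
case: (N1 a Sa Pa _ h1 Hs) => [[_ E]|[h2 E]]; first by rewrite E eqxx in ne.
have L : B k.*2 < B k.*2.+2 by apply: Pb; rewrite Sz.
rewrite /sw doubleS; apply/negP => /eqP E'.
by move: L; rewrite E' E -e1 ltnn.
Qed.

Lemma bwd {k} : sw k -> ~~ sg a k.*2 -> 0 < k /\ sw k.-1.
Proof.
move=> H Hs; have [h1 e1 e2 ne] := sw_info H.
case: (N1 a Sa Pa _ (ltnW h1) Hs) => [[h0 E]|[_ E]]; last by rewrite E eqxx in ne.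
case: k H Hs h1 e1 e2 ne h0 E => [|k] //= H Hs h1 e1 e2 ne h0 E; split => //.
have L : B k.*2.+1 < B k.*2.+3 by apply: Pb; rewrite Sz; move: h1; rewrite doubleS.
apply: contraT => Hn.
have h2 : k.*2 < size a by move: h1; rewrite doubleS; lia.
have [E1 E2] := nsw_info Hn h2.
rewrite E2 in L; last by move: h1; rewrite doubleS; lia.
by move: L; rewrite doubleS in e2; rewrite e2 -E ltnn.
Qed.

Lemma later m : forall k, size a - k.*2 <= m -> sw k ->
  exists2 q, k.*2 < q < size a & sg a q.
Proof.
elim: m => [|m IH] k Hm H; have [h1 _ _ _] := sw_info H; first by lia.
case Hs: (sg a k.*2.+1); first by exists k.*2.+1 => //; lia.
have Hm' : size a - k.+1.*2 <= m by rewrite doubleS; lia.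
have [q Hq Sq] := IH k.+1 Hm' (fwd H (negbT Hs)).
by exists q => //; move: Hq; rewrite doubleS; lia.
Qed.

Lemma backto d : forall j, sw (j + d) ->
  (forall r, j.*2 < r <= (j + d).*2 -> ~~ sg a r) -> sw j.
Proof.
elim: d => [|d IH] j H G; first by rewrite addn0 in H.
have G1 : ~~ sg a (j + d.+1).*2 by apply: G; lia.
have [_ H'] := bwd H G1; rewrite addnS /= in H'.
apply: IH H' _ => r Hr; apply: G; lia.
Qed.

Lemma fblock j d : sw j ->
  (forall r, j.*2 < r < (j + d).*2 -> ~~ sg a r) -> sw (j + d).
Proof.
move=> H; elim: d => [|d IH] G; first by rewrite addn0.
rewrite addnS; apply: fwd; first by apply: IH => r Hr; apply: G; lia.
apply: G; lia.
Qed.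

Definition Xb := [seq s <- iota 0 (size (Jset a)).-1 |
  ~~ odd s && (B (idx a s) != A (idx a s))].

Lemma Xb_info s : s \in Xb ->
  [/\ s.+1 < size (Jset a), ~~ odd s, odd (idx a s) = false & sw (idx a s)./2].
Proof.
rewrite mem_filter mem_iota => /andP[/andP[Ho Hn] /andP[_ Hs]].
have Hs' : s.+1 < size (Jset a) by lia.
have Hi := F2 a Sa Pa _ (ltnW Hs').
split => //; first by rewrite Hi (negbTE Ho).
rewrite /sw (_ : (idx a s)./2.*2 = idx a s) //.
by move: Hi; rewrite (negbTE Ho); lia.
Qed.

Lemma sizeJ : size (Jset a) = cnt a (size a).
Proof. by rewrite Jset_sg Csize. Qed.

Lemma pointwise i : i < size a -> B i = A (src_pos a Xb i).
Proof.
move=> Hi; set k := i./2.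
have hk : i = k.*2 \/ i = k.*2.+1 by rewrite /k; lia.
rewrite /src_pos.
case: (boolP (sw k)) => Hk.
- have [h1 e1 e2 ne] := sw_info Hk.
  set t := cnt a k.*2.+1.
  have Qt := QP a Sa Pa k.*2.+1 (ltnW h1).
  rewrite /= ne !orbT /= in Qt.
  have t1 : odd t by move: Qt; rewrite -/t; lia.
  have hsJ : t <= size (Jset a) by rewrite sizeJ; apply: Cmono; lia.
  set s := t.-1.
  have Hs : s < size (Jset a) by rewrite /s; move: t1 hsJ; case: (t) => //; lia.
  have [p1 p2 p3] := idx_info a _ Hs.
  set p := idx a s in p1 p2 p3.
  have pk : p < k.*2.+1.
    rewrite ltnNge; apply/negP => H.
    have := Cmono (sg a) _ _ H; rewrite -/(cnt a _) -/(cnt a _) p3 -/t /s.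
    by move: t1; case: (t) => //; lia.
  have pe : odd p = false.
    rewrite /p (F2 a Sa Pa) // /s; move: t1; case: (t) => //= n; by case: (odd n).
  have gap r : p < r <= k.*2 -> ~~ sg a r.
    move=> /andP[r1 r2]; apply/negP => Sr.
    have c1 := Cstrict (sg a) _ _ r1 p2.
    have c2 := Cstrict (sg a) r k.*2.+1 (_ : r < k.*2.+1) Sr.
    move: c1 c2; rewrite -!/(cnt a _) p3 -/t /s.
    by move: t1; case: (t) => //; lia.
  have swp : sw p./2.
    apply: (backto (k - p./2)); first by rewrite subnKC //; lia.
    by rewrite subnKC; [move=> r Hr; apply: gap; move: pe Hr; lia | lia].
  have [q Hq Sq] := later (size a) k (leq_subr _ _) Hk.
  have Hs1 : s.+1 < size (Jset a).
    rewrite sizeJ.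
    have c1 := Cstrict (sg a) q (size a) (_ : q < size a) Sq.
    have c2 := Cmono (sg a) k.*2.+1 q (_ : k.*2.+1 <= q).
    move: c1 c2; rewrite -!/(cnt a _) -/t /s.
    by move: t1 Hq; case: (t) => //; lia.
  have [q1 q2 q3] := idx_info a _ Hs1.
  have qk : k.*2.+1 <= idx a s.+1.
    rewrite leqNgt; apply/negP => H.
    have := Cstrict (sg a) _ _ H q2; rewrite -!/(cnt a _) q3 -/t /s.
    by move: t1; case: (t) => //; lia.
  have E3 := F3 a Sa Pa _ Hs1.
  have sX : s \in Xb.
    rewrite mem_filter mem_iota /= -/p.
    apply/andP; split; last by move: Hs1; lia.
    apply/andP; split; first by rewrite -(F2 a Sa Pa s Hs) -/p pe.
    by move: swp; rewrite /sw (_ : p./2.*2 = p) //; move: pe; lia.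
  set F := [seq s0 <- Xb | _].
  have sF : s \in F.
    rewrite mem_filter sX Hs1 /= -/p.
    move: hk pk qk E3; rewrite -/p; lia.
  case E: F => [|s' l]; first by rewrite E in sF.
  have : s' \in F by rewrite E mem_head.
  rewrite mem_filter => /andP[/andP[_ /andP[c1 c2]] /Xb_info[_ _ o1 _]].
  have -> : odd (i - idx a s') = odd i.
    by rewrite oddB // o1 addbF.
  case: hk => ->; rewrite ?odd_double /=.
    by rewrite e1.
  by rewrite odd_double /= e2.
- case E: [seq s0 <- Xb | _] => [|s' l].
    have h0 : k.*2 < size a by move: hk Hi; lia.
    have [E1 E2] := nsw_info Hk h0.
    by case: hk => Ei; rewrite Ei; [exact: E1|apply: E2; rewrite -Ei].
  have : s' \in [seq s0 <- Xb | (s0.+1 < size (Jset a)) &&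
           (idx a s0 <= i <= idx a s0 + (mm a s0).*2.+1)] by rewrite E mem_head.
  rewrite mem_filter => /andP[/andP[Hs1 /andP[c1 c2]] /Xb_info[_ _ o1 sw1]].
  have [p1 p2 p3] := idx_info a _ (ltnW Hs1).
  have [q1 q2 q3] := idx_info a _ Hs1.
  have E3 := F3 a Sa Pa _ Hs1.
  set p := idx a s' in p1 p2 p3 c1 c2 o1 sw1 E3.
  have gap r : p < r < idx a s'.+1 -> ~~ sg a r.
    move=> /andP[r1 r2]; apply/negP => Sr.
    have d1 := Cstrict (sg a) _ _ r1 p2.
    have d2 := Cstrict (sg a) _ _ r2 Sr.
    by move: d1 d2; rewrite -!/(cnt a _) p3 q3; lia.
  have := fblock (p./2) (k - p./2) sw1.
  rewrite subnKC; last by rewrite /k; move: c1; lia.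
  move=> /(_ _) H; case/negP: Hk; apply: H => r Hr; apply: gap.
  move: Hr o1 c1 c2 E3; rewrite /k; lia.
Qed.

End Point.

Theorem lemma2p2 (N : nat) (a : seq nat) :
  size a = N.+1 ->
  sorted leq a ->
  parity_incr a ->
  Jset a != [::] ->
  let mu := (size (Jset a)).-1 in
  [/\ odd mu = odd N,
      (forall s, s <= mu -> odd (idx a s) = odd s),
      (forall s, s < mu -> idx a s.+1 = idx a s + (mm a s).*2.+1) &
      (forall b : seq nat, in_E a b ->
         perm_eq (ring_seq b) (ring_seq a) ->
         exists X : seq nat,
           all (fun s => (s < mu) && ~~ odd s) X /\ b = aX a X)].
Proof.
move=> Hs Sa Pa HJ mu.
have J0 : 0 < size (Jset a) by case: (Jset a) HJ.
split.
- exact: F1 a Sa Pa N Hs HJ.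
- by move=> s Hs'; apply: F2 => //; move: Hs'; rewrite /mu; lia.
- by move=> s Hs'; apply: F3 => //; move: Hs'; rewrite /mu; lia.
move=> b [Sz [Pb Pm]] Rm.
have C := chunk (size a) a b (leqnn _) Sa Pb Pm Rm.
exists (Xb a b); split.
  apply/allP => s; rewrite mem_filter mem_iota => /andP[/andP[Ho _] /andP[_ H]].
  by rewrite Ho andbT.
apply: (eq_from_nth (x0 := 0)); first by rewrite size_mkseq.
move=> i Hi; rewrite Sz in Hi; rewrite nth_mkseq //.
exact: pointwise.
Qed.
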